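(* For every $\Upsilon\in\{\pi,\theta,\theta_B,\theta_{AB},\Psi\}$, the mapping $d_\Upsilon(N_1,N_2)=\frac12\big(|\Upsilon(N_1)\setminus\Upsilon(N_2)|+|\Upsilon(N_2)\setminus\Upsilon(N_1)|\big)$ defines a distance (up to isomorphism) on the class of all tree-child phylogenetic networks labeled in a fixed finite set $S$ in which no pair of parents of a hybrid node is connected by a path; that is, for all such $N_1,N_2,N_3$: $d_\Upsilon(N_1,N_2)\ge0$; $d_\Upsilon(N_1,N_2)=0$ iff $N_1\cong N_2$; $d_\Upsilon(N_1,N_2)=d_\Upsilon(N_2,N_1)$; and $d_\Upsilon(N_1,N_2)\le d_\Upsilon(N_1,N_3)+d_\Upsilon(N_3,N_2)$.
   Context: A DAG $N=(V,E)$ is labeled in $S$ if its leaves (out-degree 0) are bijectively labeled by $S$; $\cong$ means isomorphism of directed graphs preserving leaf labels. A tree node has in-degree at most 1; a hybrid node has in-degree greater than 1; a tree child is a child that is a tree node. A tree-child phylogenetic network is a rooted DAG labeled in $S$ in which every non-leaf node has at least one tree child, no tree node has out-degree 1, and every hybrid node has out-degree exactly 1. ''No pair of parents of a hybrid node is connected by a path'': if $u_1,u_2$ are parents of a hybrid node, there is no path $u_1\rightsquigarrow u_2$ nor $u_2\rightsquigarrow u_1$. For a node $v$: $C(v)$ is the set of descendant leaves; $A(v)$ the set of leaves $s$ such that every path from the root to $s$ contains $v$; $B(v)=C(v)\setminus A(v)$. For an arc $e=(u,v)$: $\pi(e)=(C(v),S\setminus C(v))$; $\theta(e)=(A(v),B(v),S\setminus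 C(v))$; $\theta_B(e)$ is $\theta(e)$ with each $s\in B(v)$ weighted by the maximum number of hybrid nodes on a path from $v$ to $s$ (including $v$ and $s$); $\theta_{AB}(e)$ is $\theta(e)$ with each $s\in A(v)\cup B(v)$ so weighted. An arc is a tree arc if its head is a tree node and a network arc otherwise; for a hybrid node $v$, $RS(v)=\{C(u)\mid u\text{ a parent of }v\}$; $\Psi(e)=\theta_{AB}(e)$ for a tree arc, $\Psi(e)=(\theta(e),RS(v))$ for a network arc with head $v$. For each $\Upsilon$, $\Upsilon(N)=\{\Upsilon(e)\mid e\in E\}$. *)

(* Defs.v *)
From mathcomp Require Import all_boot all_order all_algebra.
From mathcomp Require Import boolp.
Set Implicit Arguments. Unset Strict Implicit. Unset Printing Implicit Defensive.
Import Order.TTheory GRing.Theory Num.Theory.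

(* A directed graph on a finite node type, with an injection of the label set
   S into the nodes (meant to be a bijection onto the leaves). *)
Record network (S : finType) := Network {
  node : finType;
  arc : rel node;
  lab : S -> node }.
Arguments node {S} n.
Arguments arc {S} n _ _.
Arguments lab {S} n _.

Section Networks.
Variable S : finType.
Implicit Types N : network S.

Definition indeg N (v : node N) : nat := #|[pred u | arc N u v]|.
Definition outdeg N (v : node N) : nat := #|[pred w | arc N v w]|.
Definition is_leaf N (v : node N) : bool := outdeg v == 0.
Definition tree_node N (v : node N) : bool := indeg v <= 1.
Definition hybrid N (v : node N) : bool := 1 < indeg v.
Definition is_root N (v : node N) : bool := indeg v == 0.

Definition acyclic N : Prop :=
  forall u v : node N, arc N u v -> ~~ connect (arc N) v u.
Definition rooted N : Prop :=
  exists r : node N, is_root r /\ forall v, connect (arc N) r v.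
Definition leaf_labeled N : Prop :=
  injective (lab N) /\ forall v : node N, is_leaf v <-> exists s, lab N s = v.

Definition tree_child_network N : Prop :=
  acyclic N /\ rooted N /\ leaf_labeled N /\
  (forall v : node N, ~~ is_leaf v -> exists w, arc N v w /\ tree_node w) /\
  (forall v : node N, tree_node v -> outdeg v != 1) /\
  (forall v : node N, hybrid v -> outdeg v = 1).

Definition no_connected_parents N : Prop :=
  forall h u1 u2 : node N, hybrid h -> arc N u1 h -> arc N u2 h -> u1 != u2 ->
    ~~ connect (arc N) u1 u2.

Definition admissible N : Prop := tree_child_network N /\ no_connected_parents N.

Definition iso N1 N2 : Prop :=
  exists f : node N1 -> node N2,
    bijective f /\ (forall u v, arc N2 (f u) (f v) = arc N1 u v) /\
    (forall s, f (lab N1 s) = lab N2 s).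

Definition Cset N (v : node N) : {set S} := [set s | connect (arc N) v (lab N s)].
Definition all_paths_through N (v x : node N) : Prop :=
  forall r, is_root r -> forall p : seq (node N),
    path (arc N) r p -> last r p = x -> v \in r :: p.
Definition Aset N (v : node N) : {set S} :=
  [set s | `[< all_paths_through v (lab N s) >]].
Definition Bset N (v : node N) : {set S} := Cset v :\: Aset v.

(* maximum number of hybrid nodes on a path from v to x (v and x included);
   paths with at most #|V| arcs are enumerated, which covers all paths of an
   acyclic network *)
Definition hweight N (v x : node N) : nat :=
  \max_(k < #|node N|.+1)
     \max_(p : k.-tuple (node N) | path (arc N) v p && (last v p == x))
        count (@hybrid N) (v :: p).

Definition weighted N (v : node N) (X : {set S}) : {ffun S -> option nat} :=
  [ffun s => if s \in X then Some (hweight v (lab N s)) else None].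

Inductive upsilon := Upi | Utheta | UthetaB | UthetaAB | UPsi.

Definition wset := {ffun S -> option nat}.

Definition upsilon_val (k : upsilon) : eqType :=
  match k with
  | Upi => ({set S} * {set S})%type
  | Utheta => ({set S} * {set S} * {set S})%type
  | UthetaB => ({set S} * wset * {set S})%type
  | UthetaAB => (wset * wset * {set S})%type
  | UPsi => ((wset * wset * {set S}) + (({set S} * {set S} * {set S}) * {set {set S}}))%type
  end.

Definition compl N (v : node N) : {set S} := ~: Cset v.

Definition RS N (v : node N) : {set {set S}} := [set Cset u | u in [pred u | arc N u v]].

Definition ups (k : upsilon) N (u v : node N) : upsilon_val k :=
  match k return upsilon_val k with
  | Upi => (Cset v, compl v)
  | Utheta => (Aset v, Bset v, compl v)
  | UthetaB => (Aset v, weighted v (Bset v), compl v)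
  | UthetaAB => (weighted v (Aset v), weighted v (Bset v), compl v)
  | UPsi =>
      if tree_node v then inl (weighted v (Aset v), weighted v (Bset v), compl v)
      else inr ((Aset v, Bset v, compl v), RS v)
  end.

Definition ups_set (k : upsilon) N : seq (upsilon_val k) :=
  undup [seq ups k e.1 e.2 | e <- enum [pred e : node N * node N | arc N e.1 e.2]].

Definition card_diff (T : eqType) (X Y : seq T) : nat :=
  size (undup [seq x <- X | x \notin Y]).

Definition dist (k : upsilon) N1 N2 : rat :=
  ((card_diff (ups_set k N1) (ups_set k N2) +
    card_diff (ups_set k N2) (ups_set k N1))%:R / 2)%R.

End Networks.

(* Main.v *)
Require Import Defs.
From mathcomp Require Import all_boot all_order all_algebra.
From mathcomp Require Import boolp zify.
Set Implicit Arguments. Unset Strict Implicit. Unset Printing Implicit Defensive.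

Section Conn.
Variable T : finType.
Variable e : rel T.
Lemma connect_first (x y : T) : connect e x y -> x = y \/ exists z, e x z /\ connect e z y.
Proof.
move=> /connectP [[|z p] /= Hp ->]; first by left.
right; exists z; move/andP: Hp => [H1 H2]; split => //; apply/connectP; by exists p.
Qed.
Lemma connect_last (x y : T) : connect e x y -> x = y \/ exists z, connect e x z /\ e z y.
Proof.
move=> /connectP [p]; elim/last_ind: p => [|p z _] /= Hp ->; first by left.
right; exists (last x p); rewrite rcons_path in Hp; move/andP: Hp => [H1 H2].
rewrite last_rcons; split => //; apply/connectP; by exists p.
Qed.
End Conn.

Section Graph.
Variable S : finType.
Variable N : network S.
Hypothesis HN : admissible N.
Notation V := (node N).
Local Notation arc := (Defs.arc N).
Notation "x ~> y" := (connect arc x y) (at level 70).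

Lemma acyc : acyclic N. Proof. by case: HN => [[H _] _]. Qed.
Lemma lablab : leaf_labeled N. Proof. by case: HN => [[_ [_ [H _]]] _]. Qed.
Lemma tchild (v : V) : ~~ is_leaf v -> exists w, arc v w /\ tree_node w.
Proof. by case: HN => [[_ [_ [_ [H _]]]] _]; apply: H. Qed.
Lemma tree_out (v : V) : tree_node v -> outdeg v != 1.
Proof. by case: HN => [[_ [_ [_ [_ [H _]]]]] _]; apply: H. Qed.
Lemma hyb_out (v : V) : hybrid v -> outdeg v = 1.
Proof. by case: HN => [[_ [_ [_ [_ [_ H]]]]] _]; apply: H. Qed.
Lemma ncp : no_connected_parents N. Proof. by case: HN => _ H. Qed.
Lemma rooted' : rooted N. Proof. by case: HN => [[_ [H _]] _]. Qed.

Lemma hybridE (v : V) : hybrid v = ~~ tree_node v.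
Proof. by rewrite /hybrid /tree_node ltnNge. Qed.

Lemma antisym (x y : V) : x ~> y -> y ~> x -> x = y.
Proof.
move=> Hxy Hyx; case: (connect_first Hxy) => // [[z [Hxz Hzy]]].
have := acyc Hxz; by rewrite (connect_trans Hzy Hyx).
Qed.

Lemma arc_neq (x y : V) : arc x y -> x != y.
Proof. move=> H; apply/eqP => E; subst; have := acyc H; by rewrite connect0. Qed.

Lemma tree_par (y p q : V) : tree_node y -> arc p y -> arc q y -> p = q.
Proof.
rewrite /tree_node /indeg => /card_le1_eqP H Hp Hq; exact: H.
Qed.

Lemma TPL (x y p : V) : tree_node y -> arc p y -> x ~> y -> x = y \/ x ~> p.
Proof.
move=> Ht Hp /connect_last [->|[z [Hxz Hzy]]]; first by left.
by right; rewrite (tree_par Ht Hp Hzy).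
Qed.

Lemma leaf_noarc (v w : V) : is_leaf v -> arc v w = false.
Proof.
rewrite /is_leaf /outdeg => /eqP /card0_eq H; apply/negbTE; have := H w; by rewrite !inE => ->.
Qed.

Lemma leaf_conn (v w : V) : is_leaf v -> v ~> w -> w = v.
Proof.
move=> Hl /connect_first [->//|[z [Hz _]]]; by rewrite leaf_noarc in Hz.
Qed.

Lemma lab_leaf (s : S) : is_leaf (lab N s).
Proof. case: lablab => _ H; apply/H; by exists s. Qed.

Lemma leaf_tree (v : V) : is_leaf v -> tree_node v.
Proof.
move=> Hl; rewrite -[tree_node v]negbK -hybridE; apply/negP => /hyb_out; move: Hl; rewrite /is_leaf => /eqP ->//.
Qed.

Lemma out2 (v c : V) : tree_node v -> arc v c -> exists w, arc v w /\ w != c.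
Proof.
move=> Ht Hc; have H1 := tree_out Ht.
have : 1 < outdeg v.
  rewrite ltn_neqAle eq_sym H1 /=; apply/card_gt0P; by exists c.
move/card_gt1P => [x [y [Hx Hy Hxy]]].
case: (eqVneq x c) => [E|Hxc]; last by exists x.
exists y; split => //; by rewrite -E eq_sym.
Qed.

Lemma hyb_child (h c d : V) : hybrid h -> arc h c -> arc h d -> c = d.
Proof.
move/hyb_out => H Hc Hd; have : #|[pred w | arc h w]| <= 1 by rewrite -/(outdeg h) H.
move/card_le1_eqP; exact.
Qed.

Lemma hyb_tchild (h : V) : hybrid h -> exists c, arc h c /\ tree_node c.
Proof.
move=> H; apply: tchild; by rewrite /is_leaf (hyb_out H).
Qed.

Lemma hyb_par_tree (h p : V) : hybrid h -> arc p h -> tree_node p.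
Proof.
move=> Hh Hp; rewrite -[tree_node p]negbK -hybridE; apply/negP => Hph.
have [c [Hc Htc]] := hyb_tchild Hph.
by move: Htc; rewrite (hyb_child Hph Hc Hp) -[tree_node h]negbK -hybridE Hh.
Qed.

Definition C (v : V) := Cset v.

Lemma CE (v : V) s : (s \in C v) = (v ~> lab N s).
Proof. by rewrite inE. Qed.

Lemma C_mono (u v : V) : u ~> v -> C v \subset C u.
Proof. move=> H; apply/subsetP => s; rewrite !CE; exact: connect_trans. Qed.

Lemma C_lab s : C (lab N s) = [set s].
Proof.
apply/setP => t; rewrite CE inE; apply/idP/eqP => [H|->//].
case: lablab => Hi _; exact: (Hi _ _ (leaf_conn (lab_leaf s) H)).
Qed.

Lemma TPath_n n (v : V) : #|[pred y | v ~> y]| <= n ->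
  exists s, v ~> lab N s /\ forall x, x ~> lab N s ->
    x ~> v \/ exists c, [/\ arc v c, tree_node c & c ~> x].
Proof.
elim: n v => [|n IH] v Hn.
  by move: Hn; rewrite leqn0 => /eqP /card0_eq /(_ v); rewrite !inE connect0.
case: (boolP (is_leaf v)) => Hl.
  case: lablab => _ /(_ v) [] /(_ Hl) [s Hs] _.
  exists s; rewrite Hs connect0; split => // x H; by left.
have [c [Hc Htc]] := tchild Hl.
have Hlt : #|[pred y | c ~> y]| <= n.
  rewrite -ltnS; apply: leq_trans Hn; apply: proper_card; apply/properP; split.
    apply/subsetP => y; rewrite !inE; apply: connect_trans; exact: connect1.
  exists v; rewrite !inE ?connect0 //; exact: acyc.
have [s [Hcs Hs]] := IH c Hlt.
exists s; split; first by apply: connect_trans Hcs; exact: connect1.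
move=> x /Hs [Hxc|[c' [Hcc' _ Hc'x]]].
  case: (TPL Htc Hc Hxc) => [->|]; last by left.
  by right; exists c; rewrite connect0.
right; exists c; split => //; apply: connect_trans Hc'x; exact: connect1.
Qed.

Lemma TPath (v : V) : exists s, v ~> lab N s /\ forall x, x ~> lab N s ->
    x ~> v \/ exists c, [/\ arc v c, tree_node c & c ~> x].
Proof. exact: (@TPath_n _ v (leqnn _)). Qed.

Lemma M1 (v c : V) : tree_node v -> arc v c -> tree_node c -> ~~ (C v \subset C c).
Proof.
move=> Htv Hc Htc; apply/negP => Hsub.
have [w [Hw Hwc]] := out2 Htv Hc.
have [s [Hws Hs]] := TPath w.
have Hcs : c ~> lab N s.
  rewrite -CE; apply: (subsetP Hsub); apply: (subsetP (C_mono (connect1 Hw))); by rewrite CE.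
case: (Hs c Hcs) => [Hcw | [c' [Hwc' _ Hc'c]]].
  case: (connect_last Hcw) => [E | [p [Hcp Hpw]]]; first by rewrite E eqxx in Hwc.
  case: (eqVneq p v) => [Epv | Hpv].
    by subst p; have := acyc Hc; rewrite Hcp.
  have Hhw : hybrid w.
    rewrite hybridE; apply/negP => Htw; by rewrite (tree_par Htw Hpw Hw) eqxx in Hpv.
  have := ncp Hhw Hw Hpw; rewrite eq_sym Hpv => /(_ isT).
  by rewrite (connect_trans (connect1 Hc) Hcp).
case: (TPL Htc Hc Hc'c) => [E|Hc'v].
  subst c'; have E := tree_par Htc Hwc' Hc; subst w; by have := arc_neq Hw; rewrite eqxx.
have := acyc Hw; by rewrite (connect_trans (connect1 Hwc') Hc'v).
Qed.

Lemma M3 (u v : V) : tree_node v -> C v \subset C u -> u ~> v.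
Proof.
move=> Htv Hsub; have [s [Hvs Hs]] := TPath v.
have Hus : u ~> lab N s by rewrite -CE; apply: (subsetP Hsub); rewrite CE.
case: (Hs u Hus) => // [[c [Hc Htc Hcu]]].
have := M1 Htv Hc Htc; by rewrite (subset_trans Hsub (C_mono Hcu)).
Qed.

Lemma M4 (u v : V) : tree_node u -> tree_node v -> C u = C v -> u = v.
Proof.
move=> Hu Hv E; apply: antisym; [apply: M3 Hv _ | apply: M3 Hu _]; by rewrite E.
Qed.

Lemma hyb_C (h c : V) : hybrid h -> arc h c -> C h = C c.
Proof.
move=> Hh Hc; apply/setP => s; rewrite !CE; apply/idP/idP => H.
  case: (connect_first H) => [E|[z [Hz Hzs]]].
    have := leaf_tree (lab_leaf s); by rewrite -E -[tree_node h]negbK -hybridE Hh.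
  by rewrite (hyb_child Hh Hc Hz).
apply: connect_trans H; exact: connect1.
Qed.

Lemma M6 (h1 h2 : V) : hybrid h1 -> hybrid h2 -> C h1 = C h2 -> h1 = h2.
Proof.
move=> H1 H2 E.
have [c1 [Hc1 Ht1]] := hyb_tchild H1; have [c2 [Hc2 Ht2]] := hyb_tchild H2.
have Ec : c1 = c2 by apply: M4 => //; rewrite -(hyb_C H1 Hc1) -(hyb_C H2 Hc2).
subst c2; exact: tree_par Ht1 Hc1 Hc2.
Qed.

Lemma tree_rep (v : V) : exists t, tree_node t /\ C v = C t.
Proof.
case: (boolP (tree_node v)) => Hv; first by exists v.
rewrite -hybridE in Hv; have [c [Hc Htc]] := hyb_tchild Hv; exists c; split => //.
exact: hyb_C.
Qed.

Definition key (v : V) := (C v, hybrid v).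

Lemma key_inj : injective key.
Proof.
move=> u v [E1 E2]; case: (boolP (hybrid u)) => Hu.
  apply: M6 => //; by rewrite -E2.
move: (Hu); rewrite E2 !hybridE !negbK => Hv; rewrite hybridE negbK in Hu; exact: M4.
Qed.

Definition clusters : {set {set S}} := [set C v | v : V].

Lemma Kmem (v : V) : C v \in clusters.
Proof. by apply/imsetP; exists v. Qed.

Lemma Kcase X : X \in clusters -> exists t, tree_node t /\ X = C t.
Proof. move/imsetP => [v _ ->]; exact: tree_rep. Qed.

Lemma strict_up (t w p : V) : tree_node t -> tree_node w -> C t \proper C w -> arc p t -> w ~> p.
Proof.
move=> Ht Hw; rewrite properEneq => /andP [Hne Hsub] Hp.
case: (TPL Ht Hp (M3 Ht Hsub)) => // E; by rewrite E eqxx in Hne.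
Qed.

Lemma C_proper (u v : V) : tree_node u -> tree_node v -> arc u v -> C v \proper C u.
Proof.
move=> Hu Hv Huv; rewrite properEneq C_mono ?connect1 // andbT.
apply/eqP => E; have := arc_neq Huv; by rewrite (M4 Hu Hv (esym E)) eqxx.
Qed.

End Graph.

Section Cover.
Variable S : finType.
Definition ucov (K : {set {set S}}) (Y : {set S}) : {set {set S}} :=
  [set X in K | (Y \proper X) && [forall Z in K, ~~ ((Y \proper Z) && (Z \proper X))]].
Definition multi (K : {set {set S}}) Y := 1 < #|ucov K Y|.
Definition Rk (K : {set {set S}}) (a b : {set S} * bool) :=
  if a.2 then ~~ b.2 && (a.1 == b.1) else (a.1 \in ucov K b.1) && (b.2 == multi K b.1).
Definition Keys (K : {set {set S}}) : {set {set S} * bool} :=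
  [set (X, false) | X in K] :|: [set (X, true) | X in K & multi K X].
End Cover.

Section Graph2.
Variable S : finType.
Variable N : network S.
Hypothesis HN : admissible N.
Notation V := (node N).
Local Notation arc := (Defs.arc N).
Notation "x ~> y" := (connect arc x y) (at level 70).
Notation K := (clusters N).
Notation C := (@C S N).

Lemma cover_tree (t p : V) : tree_node t -> tree_node p -> arc p t ->
  ucov K (C t) = [set C p].
Proof.
move=> Ht Hp Hpt; have Hpr := C_proper HN Hp Ht Hpt.
apply/setP => X; rewrite !inE; apply/idP/eqP.
  move/andP => [HXK /andP [Hprop /forall_inP Hfor]].
  have [w [Hw EX]] := Kcase HN HXK; subst X.
  have Hwp := strict_up HN Ht Hw Hprop Hpt.
  have := Hfor _ (Kmem p); rewrite Hpr /= => Hn.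
  apply/eqP; by rewrite eq_sym eqEproper (C_mono Hwp).
move=> ->; rewrite Kmem Hpr /=; apply/forall_inP => Z HZ; apply/negP => /andP [H1 H2].
have [w [Hw EZ]] := Kcase HN HZ; subst Z.
have Hwp := strict_up HN Ht Hw H1 Hpt.
by move: H2; rewrite properE (C_mono Hwp) andbF.
Qed.

Lemma cover_hyb (h p : V) : hybrid h -> arc p h -> C p \in ucov K (C h).
Proof.
move=> Hh Hp; have Htp := hyb_par_tree HN Hh Hp.
have [c [Hc Htc]] := hyb_tchild HN Hh; have EC := hyb_C HN Hh Hc.
rewrite inE Kmem /=; apply/andP; split.
  rewrite properEneq C_mono ?connect1 // andbT EC; apply/eqP => E.
  have E2 := M4 HN Htc Htp E; subst c; have := acyc HN Hp; by rewrite connect1.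
apply/forall_inP => Z HZ; apply/negP => /andP [H1 H2].
have [w [Hw EZ]] := Kcase HN HZ; subst Z.
rewrite EC in H1; have Hwh := strict_up HN Htc Hw H1 Hc.
case: (connect_last Hwh) => [E|[q [Hwq Hqh]]].
  by move: Hw; rewrite E -[tree_node h]negbK -hybridE Hh.
case: (eqVneq q p) => [E|Hqp].
  subst q; by move: H2; rewrite properE (C_mono Hwq) andbF.
have Hpw : p ~> w by apply: (M3 HN Hw); exact: proper_sub H2.
have := ncp HN Hh Hp Hqh; rewrite eq_sym Hqp => /(_ isT).
by rewrite (connect_trans Hpw Hwq).
Qed.

Lemma multi_hyb (h : V) : hybrid h -> multi K (C h).
Proof.
move=> Hh; have := Hh; rewrite /hybrid /indeg => /card_gt1P [p [q [Hp Hq Hpq]]].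
rewrite !inE in Hp Hq.
apply/card_gt1P; exists (C p), (C q); rewrite !cover_hyb //; split => //.
apply/eqP => E; have := M4 HN (hyb_par_tree HN Hh Hp) (hyb_par_tree HN Hh Hq) E.
by move/eqP; rewrite (negbTE Hpq).
Qed.

Lemma root_or_parent (t : V) : (C t = setT) \/ exists p, arc p t.
Proof.
have [r [Hr Hall]] := rooted' HN.
case: (connect_last (Hall t)) => [E|[p [_ Hp]]]; last by right; exists p.
left; subst t; apply/setP => s; by rewrite CE inE Hall.
Qed.

Lemma multi_setT : multi K setT = false.
Proof.
apply/negP => /card_gt1P [x [_ [Hx _ _]]]; move: Hx; rewrite inE => /andP [_ /andP [H _]].
by move: H; rewrite properE subsetT andbF.
Qed.

Lemma tree_not_hyb (v : V) : tree_node v -> hybrid v = false.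
Proof. by rewrite hybridE => ->. Qed.

Lemma nhyb_tree (v : V) : ~~ hybrid v -> tree_node v.
Proof. by rewrite hybridE negbK. Qed.

Lemma keys_eq : [set key v | v : V] = Keys K.
Proof.
apply/setP => [[X b]]; apply/idP/idP.
  move/imsetP => [v _ [-> ->]]; rewrite !inE; case: (boolP (hybrid v)) => Hv; apply/orP.
    right; apply/imsetP; exists (C v) => //; by rewrite inE Kmem multi_hyb.
  left; apply/imsetP; by exists (C v); rewrite ?Kmem.
rewrite inE => /orP [/imsetP [Y HY [-> ->]] | /imsetP [Y HY [-> ->]]].
  have [t [Ht ->]] := Kcase HN HY; apply/imsetP; exists t => //; by rewrite /key tree_not_hyb.
move: HY; rewrite inE => /andP [HYK Hm].
have [t [Ht EY]] := Kcase HN HYK; subst Y.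
case: (root_or_parent t) => [E|[p Hp]]; first by rewrite E multi_setT in Hm.
case: (boolP (hybrid p)) => Hph.
  apply/imsetP; exists p => //; by rewrite /key Hph (hyb_C HN Hph Hp).
by move: Hm; rewrite /multi (cover_tree Ht (nhyb_tree Hph) Hp) cards1.
Qed.

Lemma arc_key (u v : V) : arc u v = Rk K (key u) (key v).
Proof.
rewrite /Rk /key /=; case: (boolP (hybrid u)) => Hu.
  apply/idP/idP.
    move=> Huv; have [c [Hc Htc]] := hyb_tchild HN Hu; have E := hyb_child HN Hu Huv Hc; subst c.
    by rewrite tree_not_hyb // (hyb_C HN Hu Huv) eqxx.
  move/andP => [Hv /eqP E]; have [c [Hc Htc]] := hyb_tchild HN Hu.
  rewrite (hyb_C HN Hu Hc) in E; by rewrite -(M4 HN Htc (nhyb_tree Hv) E).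
have Htu := nhyb_tree Hu.
apply/idP/idP.
  move=> Huv; case: (boolP (hybrid v)) => Hv.
    by rewrite cover_hyb // multi_hyb.
  by rewrite /multi (cover_tree (nhyb_tree Hv) Htu Huv) cards1 inE eqxx.
move/andP => [Hcov /eqP Hm].
have Hpr : C v \proper C u by move: Hcov; rewrite inE => /andP [_ /andP []].
have Hfor : forall Z, Z \in K -> ~~ ((C v \proper Z) && (Z \proper C u)).
  by move: Hcov; rewrite inE => /andP [_ /andP [_ /forall_inP]].
case: (boolP (hybrid v)) => Hv.
  have [c [Hc Htc]] := hyb_tchild HN Hv.
  rewrite (hyb_C HN Hv Hc) in Hpr.
  have Huv := strict_up HN Htc Htu Hpr Hc.
  case: (connect_last Huv) => [E|[q [Huq Hqv]]]; first by subst u; rewrite Hv in Hu.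
  case: (eqVneq q u) => [E|Hqu]; first by rewrite -E.
  have Htq := hyb_par_tree HN Hv Hqv.
  have H1 : C v \proper C q by move: (cover_hyb Hv Hqv); rewrite inE => /andP [_ /andP [-> _]].
  have H2 : C q \proper C u.
    rewrite properEneq (C_mono Huq) andbT; apply/eqP => E; by rewrite (M4 HN Htq Htu E) eqxx in Hqu.
  by have := Hfor _ (Kmem q); rewrite H1 H2.
have Htv := nhyb_tree Hv.
have Huv := M3 HN Htv (proper_sub Hpr).
case: (connect_last Huv) => [E|[p [_ Hp]]].
  by subst u; rewrite properEneq eqxx in Hpr.
case: (boolP (hybrid p)) => Hph.
  have := multi_hyb Hph; by rewrite (hyb_C HN Hph Hp) -Hm (negbTE Hv).
move: Hcov; rewrite (cover_tree Htv (nhyb_tree Hph) Hp) inE => /eqP E.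
by rewrite (M4 HN Htu (nhyb_tree Hph) E).
Qed.

End Graph2.

Lemma hweight_le (S : finType) (N1 N2 : network S) (f : node N1 -> node N2) :
  (forall u v, Defs.arc N1 u v -> Defs.arc N2 (f u) (f v)) ->
  (forall v, hybrid (f v) = hybrid v) -> #|node N1| = #|node N2| ->
  forall v x, hweight v x <= hweight (f v) (f x).
Proof.
move=> Ha Hh Hc v x; rewrite /hweight; apply/bigmax_leqP => k _.
apply/bigmax_leqP => p /andP [Hp /eqP Hl].
have Hk : k < #|node N2|.+1 by rewrite -Hc ltn_ord.
apply: (leq_trans _ (leq_bigmax (Ordinal Hk))).
have Hc2 : path (Defs.arc N2) (f v) (map f p) && (last (f v) (map f p) == f x).
  rewrite last_map Hl eqxx andbT path_map; apply: sub_path Hp => a b /=; exact: Ha.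
apply: (leq_trans _ (leq_bigmax_cond (map_tuple f p) Hc2)).
rewrite /= Hh; apply: eq_leq; congr (_ + _); rewrite count_map; apply: eq_count => y /=; by rewrite Hh.
Qed.

Section IsoInv.
Variable S : finType.
Variables N1 N2 : network S.
Variable f : node N1 -> node N2.
Variable g : node N2 -> node N1.
Hypothesis fK : cancel f g.
Hypothesis gK : cancel g f.
Hypothesis Harc : forall u v, Defs.arc N2 (f u) (f v) = Defs.arc N1 u v.
Hypothesis Hlab : forall s, f (lab N1 s) = lab N2 s.

Lemma f_inj : injective f. Proof. exact: can_inj fK. Qed.

Lemma pathE x p : path (Defs.arc N2) (f x) (map f p) = path (Defs.arc N1) x p.
Proof. rewrite path_map; apply: eq_path => a b /=; exact: Harc. Qed.

Lemma connE x y : connect (Defs.arc N2) (f x) (f y) = connect (Defs.arc N1) x y.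
Proof.
apply/idP/idP => [/connectP [p2 Hp El]|/connectP [p Hp El]]; apply/connectP.
  exists (map g p2); first by rewrite -pathE (mapK gK).
  apply: f_inj; by rewrite El -(last_map f) (mapK gK).
exists (map f p); first by rewrite pathE.
by rewrite last_map El.
Qed.

Lemma indegE v : indeg (f v) = indeg v.
Proof.
rewrite /indeg -(card_image f_inj); apply: eq_card => w; rewrite !inE.
by rewrite -{2}[w]gK (mem_image f_inj) inE -Harc gK.
Qed.

Lemma treeE v : tree_node (f v) = tree_node v. Proof. by rewrite /tree_node indegE. Qed.
Lemma hybE v : hybrid (f v) = hybrid v. Proof. by rewrite /hybrid indegE. Qed.
Lemma rootE v : is_root (f v) = is_root v. Proof. by rewrite /is_root indegE. Qed.

Lemma CsE v : Cset (f v) = Cset v.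
Proof. apply/setP => s; by rewrite !inE -Hlab connE. Qed.

Lemma complE v : compl (f v) = compl v.
Proof. by rewrite /compl CsE. Qed.

Lemma AsE v : Aset (f v) = Aset v.
Proof.
apply/setP => s; rewrite !inE; apply: asbool_equiv_eq; split.
  move=> H r Hr p Hp Hl.
  have := H (f r); rewrite rootE => /(_ Hr (map f p)); rewrite pathE last_map Hl Hlab.
  move=> /(_ Hp erefl); rewrite -map_cons mem_map //; exact: f_inj.
move=> H r2 Hr2 p2 Hp2 Hl2.
have Er : r2 = f (g r2) by rewrite gK.
have Ep : p2 = map f (map g p2) by rewrite (mapK gK).
rewrite Er Ep -map_cons map_f //; apply: H.
- by rewrite -rootE gK.
- by rewrite -pathE -Er -Ep.
apply: f_inj; by rewrite -(last_map f) -Er -Ep Hl2 Hlab.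
Qed.

Lemma BsE v : Bset (f v) = Bset v.
Proof. by rewrite /Bset CsE AsE. Qed.

Lemma card_eq : #|node N1| = #|node N2|.
Proof. apply: bij_eq_card; exists g => //. Qed.

Lemma hweightE v x : hweight (f v) (f x) = hweight v x.
Proof.
apply/eqP; rewrite eqn_leq; apply/andP; split; last first.
  apply: hweight_le => //; [by move=> a b; rewrite Harc | exact: hybE | exact: card_eq].
have := @hweight_le S N2 N1 g _ _ _ (f v) (f x); rewrite !fK; apply.
- by move=> a b; rewrite -Harc !gK.
- by move=> w; rewrite -hybE gK.
- by rewrite card_eq.
Qed.

Lemma weightedE v X : weighted (f v) X = weighted v X.
Proof. apply/ffunP => s; by rewrite !ffunE -Hlab hweightE. Qed.

Lemma RSE v : RS (f v) = RS v.
Proof.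
apply/setP => X; apply/imsetP/imsetP => [[w Hw ->]|[u Hu ->]].
  exists (g w); first by rewrite inE -Harc gK.
  by rewrite -CsE gK.
exists (f u); first by rewrite inE Harc.
by rewrite CsE.
Qed.

Lemma upsE k u v : ups k (f u) (f v) = ups k u v.
Proof.
case: k => /=; rewrite ?CsE ?complE ?AsE ?BsE ?weightedE //.
by rewrite treeE RSE.
Qed.

Lemma ups_sub k : {subset ups_set k N1 <= ups_set k N2}.
Proof.
move=> x; rewrite /ups_set !mem_undup => /mapP [[u v] He ->].
apply/mapP; exists (f u, f v); last by rewrite /= upsE.
by move: He; rewrite !mem_enum !inE /= Harc.
Qed.

End IsoInv.

Import Order.TTheory GRing.Theory Num.Theory.

Lemma card_diff0 (T : eqType) (X Y : seq T) : {subset X <= Y} -> card_diff X Y = 0.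
Proof.
move=> H; rewrite /card_diff (@eq_in_filter _ _ pred0) ?filter_pred0 //.
move=> x Hx /=; by rewrite (H _ Hx).
Qed.

Lemma card_diff0' (T : eqType) (X Y : seq T) : card_diff X Y = 0 -> {subset X <= Y}.
Proof.
move=> /eqP; rewrite /card_diff size_eq0 => /eqP H x Hx; apply/negPn/negP => Hy.
have : x \in undup [seq x <- X | x \notin Y] by rewrite mem_undup mem_filter Hy.
by rewrite H.
Qed.

Lemma card_diff_tri (T : eqType) (X Y Z : seq T) :
  card_diff X Y <= card_diff X Z + card_diff Z Y.
Proof.
rewrite /card_diff -size_cat; apply: uniq_leq_size; first exact: undup_uniq.
move=> x; rewrite mem_cat !mem_undup !mem_filter => /andP [Hy Hx].
case: (boolP (x \in Z)) => Hz; by rewrite ?Hx ?Hy ?orbT.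
Qed.

Definition projC (S : finType) (k : upsilon) : upsilon_val S k -> {set S} :=
  match k return upsilon_val S k -> {set S} with
  | Upi => fun x => x.2
  | Utheta => fun x => x.2
  | UthetaB => fun x => x.2
  | UthetaAB => fun x => x.2
  | UPsi => fun x => match x with inl y => y.2 | inr y => y.1.2 end
  end.

Lemma projC_ups (S : finType) k (N : network S) (u v : node N) : projC (ups k u v) = compl v.
Proof. case: k => //=; by case: (tree_node v). Qed.

Lemma ups_mem (S : finType) k (N : network S) (u v : node N) :
  Defs.arc N u v -> ups k u v \in ups_set k N.
Proof.
move=> H; rewrite mem_undup; apply/mapP; exists (u, v) => //; by rewrite mem_enum inE.
Qed.

Lemma ups_clusters (S : finType) k (N1 N2 : network S) :
  admissible N1 -> admissible N2 -> {subset ups_set k N1 <= ups_set k N2} ->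
  clusters N1 \subset clusters N2.
Proof.
move=> H1 H2 Hsub; apply/subsetP => X /imsetP [v _ ->].
case: (root_or_parent H1 v) => [E|[u Hu]].
  rewrite E; have [r [_ Hall]] := rooted' H2; apply/imsetP; exists r => //.
  apply/setP => s; by rewrite /C !inE Hall.
have := Hsub _ (ups_mem k Hu); rewrite mem_undup => /mapP [[u' v'] _ E].
have := congr1 (@projC S k) E; rewrite !projC_ups => /setC_inj E2.
apply/imsetP; exists v' => //; by rewrite /C E2.
Qed.

Lemma key_lab (S : finType) (N : network S) (HN : admissible N) s :
  key (lab N s) = ([set s], false).
Proof. by rewrite /key (C_lab HN) (tree_not_hyb (leaf_tree HN (lab_leaf HN s))). Qed.

Lemma clusters_iso (S : finType) (N1 N2 : network S) :
  admissible N1 -> admissible N2 -> clusters N1 = clusters N2 -> iso N1 N2.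
Proof.
move=> H1 H2 EK.
have [r1 _] := rooted' H1; have [r2 _] := rooted' H2.
have EI : [set key v | v : node N1] = [set key w | w : node N2].
  by rewrite (keys_eq H1) (keys_eq H2) EK.
pose f := fun v : node N1 => odflt r2 [pick w | key w == key v].
pose g := fun w : node N2 => odflt r1 [pick v | key v == key w].
have Hf : forall v, key (f v) = key v.
  move=> v; rewrite /f; case: pickP => [w /eqP //|H].
  have : key v \in [set key w | w : node N2] by rewrite -EI; apply/imsetP; exists v.
  move/imsetP => [w _ E]; by have := H w; rewrite E eqxx.
have Hg : forall w, key (g w) = key w.
  move=> w; rewrite /g; case: pickP => [v /eqP //|H].
  have : key w \in [set key v | v : node N1] by rewrite EI; apply/imsetP; exists w.
  move/imsetP => [v _ E]; by have := H v; rewrite E eqxx.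
have fK : cancel f g by move=> v; apply: (key_inj H1); rewrite Hg Hf.
have gK : cancel g f by move=> w; apply: (key_inj H2); rewrite Hf Hg.
exists f; split; first by exists g.
split.
  move=> u v; by rewrite (arc_key H2) (arc_key H1) !Hf EK.
move=> s; apply: (key_inj H2); by rewrite Hf !key_lab.
Qed.

Lemma dist0 (S : finType) k (N1 N2 : network S) :
  dist k N1 N2 = 0%R <-> (card_diff (ups_set k N1) (ups_set k N2) = 0 /\
                          card_diff (ups_set k N2) (ups_set k N1) = 0).
Proof.
rewrite /dist; split.
  move/eqP; rewrite mulf_eq0 invr_eq0 pnatr_eq0 orbF addn_eq0 => /andP [/eqP -> /eqP ->].
  by [].
by move=> [-> ->]; rewrite mul0r.
Qed.

Local Open Scope ring_scope.

Theorem corollary10 (S : finType) (k : upsilon) (N1 N2 N3 : network S) :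
  admissible N1 -> admissible N2 -> admissible N3 ->
  [/\ 0 <= dist k N1 N2,
      dist k N1 N2 = 0 <-> iso N1 N2,
      dist k N1 N2 = dist k N2 N1 &
      dist k N1 N2 <= dist k N1 N3 + dist k N3 N2].
Proof.
move=> H1 H2 H3; split.
- by rewrite /dist divr_ge0 ?ler0n.
- rewrite dist0; split.
    move=> [/card_diff0' E1 /card_diff0' E2]; apply: clusters_iso => //.
    apply/eqP; rewrite eqEsubset; apply/andP; split; [exact: (ups_clusters H1 H2 E1) | exact: (ups_clusters H2 H1 E2)].
  move=> [f [[g fK gK] [Harc Hlab]]].
  have Harc' : forall a b, Defs.arc N1 (g a) (g b) = Defs.arc N2 a b by move=> a b; rewrite -Harc !gK.
  have Hlab' : forall s, g (lab N2 s) = lab N1 s by move=> s; rewrite -Hlab fK.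
  split; apply: card_diff0; [exact: (ups_sub fK gK Harc Hlab) | exact: (ups_sub gK fK Harc' Hlab')].
- by rewrite /dist addnC.
- rewrite /dist -mulrDl -natrD; apply: ler_wpM2r; first by rewrite invr_ge0 ler0n.
  rewrite ler_nat.
  have := card_diff_tri (ups_set k N1) (ups_set k N2) (ups_set k N3).
  have := card_diff_tri (ups_set k N2) (ups_set k N1) (ups_set k N3).
  lia.
Qed.
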